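(* Let $(\mathcal{F},\mathcal{T}^X)$, $\mathcal{F}:\mathcal{T}^Y\to\mathcal{T}^Z$, be a dynamical system of (projective, holomorphic, stable) trees of spheres of degree $d$, dynamically approximable by a sequence $(f_n,y_n,z_n)_n$ of dynamically marked rational maps. Suppose that $v$ is an internal vertex of $T^X$ with $F(v)=v$ and $\deg(v)=d$. Then the sequence of conjugacy classes $[f_n]\in\mathrm{rat}_d$ converges to the conjugacy class $[f_v]\in\mathrm{rat}_d$.
   Context: $\mathrm{Rat}_d$ is the space of rational maps of degree $d$ and $\mathrm{rat}_d$ its quotient by conjugation by Möbius transformations; for $f_v:\mathbb{S}_v\to\mathbb{S}_v$, $[f_v]$ is the class of its expression in any projective chart. Trees: finite connected graphs without cycles (vertices, edges $2$-element subsets, $E_v$ edges at $v$); leaves have valence $1$, others internal ($IV$); stable: internal valence $\ge3$. For $e\in E_v$, $B_v(e)$ is the component of the tree minus $v$ containing $e$. A projective tree of spheres $\mathcal{T}^X$ marked by finite $X$ ($\ge3$ elements): tree $T^X$ with leaf set $X$ and, for internal $v$, a sphere $\mathbb{S}_v$ with projective structure and injection $i_v:E_v\to\mathbb{S}_v$; $Y_v$ etc. denote attaching point sets; $a_v(x)=i_v(e)$ for $x\in B_v(e)$. A holomorphic cover $\mathcal{F}:\mathcal{T}^Y\to\mathcal{T}^Z$: a map $F$ of trees sending vertices to vertices, edges $\{v,w\}$ to edges $\{F(v),F(w)\}$, $Y$ into $Z$, $IV^Y$ into $IV^Z$, with holomorphic branched coverings $f_v:\mathbb{S}_v\to\mathbb{S}_{F(v)}$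 that are coverings off $Y_v$, satisfy $f_v\circ i_v=i_{F(v)}\circ F$, and have equal local degrees at both ends of edges between internal vertices; $\deg(v)=\deg f_v$; the degree is $\sum_{v'\in F^{-1}(w)}\deg(v')$, independent of $w$. $T^X$ compatible with $T^Y$: $X\subseteq Y$, $IV^X\subseteq IV^Y$, and a vertex of $T^X$ separates three vertices of $T^X$ (puts them in distinct components of its complement) in $T^X$ iff in $T^Y$; $\mathcal{T}^X\triangleleft\mathcal{T}^Y$ if moreover internal spheres of $\mathcal{T}^X$ are the same projective spheres in $\mathcal{T}^Y$ and $a^X_v=a^Y_v|_X$. A dynamical system is $(\mathcal{F},\mathcal{T}^X)$ with $X\subseteq Y\cap Z$, $\mathcal{T}^X\triangleleft\mathcal{T}^Y$, $\mathcal{T}^X\triangleleft\mathcal{T}^Z$. A portrait of degree $d$: $\mathbf{F}=(F,\deg)$, $F:Y\to Z$, $\deg:Y\to\mathbb{N}\setminus\{0\}$, $\sum(\deg(a)-1)=2d-2$, $\sum_{a\in F^{-1}(b)}\deg(a)=d$. A rational map dynamically marked by $(\mathbf{F},X)$: $(f,y,z)$, $f\in\mathrm{Rat}_d$, $y:Y\to\hat{\mathbb{C}}$, $z:Z\to\hat{\mathbb{C}}$ injective, $f\circ y=z\circ F$, $\deg_{y(a)}f=\deg(a)$, $y|_X=z|_X$. Dynamically approximable: the $(f_n,y_n,z_n)$ are dynamically marked by $(\mathbf{F},X)$ where $\mathbf{F}$ is the portrait $(F|_Y,\text{local degrees at leaves})$ of $\mathcal{F}$, and for every $v\in IV^Y$,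 $w=F(v)$, there are projective isomorphisms $\phi^Y_{n,v}:\hat{\mathbb{C}}\to\mathbb{S}_v$, $\phi^Z_{n,w}:\hat{\mathbb{C}}\to\mathbb{S}_w$ with $\phi^Y_{n,v}\circ y_n\to a^Y_v$, $\phi^Z_{n,w}\circ z_n\to a^Z_w$, $\phi^Z_{n,w}\circ f_n\circ(\phi^Y_{n,v})^{-1}\to f_v$ locally uniformly on $\mathbb{S}_v\setminus Y_v$, and $\phi^Y_{n,v}=\phi^Z_{n,v}$ for all $v\in IV^X$. *)

(* Defs.v *)
From mathcomp Require Import all_boot all_order all_algebra.
Import Order.TTheory GRing.Theory Num.Theory.
From mathcomp Require Import reals.
From mathcomp Require Export complex.
Set Implicit Arguments.
Unset Strict Implicit.
Unset Printing Implicit Defensive.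
Local Open Scope ring_scope.

(* None stands for the point at infinity.                                   *)
Section Sphere.
Variable R : realType.

Definition Chat := option R[i].

Definition sqn (z : R[i]) : R := Re z ^+ 2 + Im z ^+ 2.

(* Square of the chordal distance (up to the constant factor 4);
   it induces the standard topology of the Riemann sphere. *)
Definition chord2 (z w : Chat) : R :=
  match z, w with
  | Some a, Some b => sqn (a - b) / ((1 + sqn a) * (1 + sqn b))
  | Some a, None | None, Some a => 1 / (1 + sqn a)
  | None, None => 0
  end.

Definition cvgC (xs : nat -> Chat) (x : Chat) : Prop :=
  forall eps : R, 0 < eps -> exists N, forall n, (N <= n)%N -> chord2 (xs n) x < eps.

Definition lu_cvg_off (A : Chat -> Prop) (gs : nat -> Chat -> Chat) (g : Chat -> Chat) :=
  forall z, ~ A z -> exists2 delta : R, 0 < delta &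
    forall eps : R, 0 < eps -> exists N, forall n, (N <= n)%N ->
      forall w, chord2 w z < delta -> chord2 (gs n w) (g w) < eps.

(* Rational maps.  A rational map of degree d is [P : Q] with P, Q of       *)
(* degree <= d, no common zero in P^1 (i.e. coprime and one of them has     *)
(* degree exactly d); a pair (P,Q) is a point of C^{2d+2} with nonzero      *)
(* resultant, i.e. a representative of a point of Rat_d in P^{2d+1}.        *)
Definition rpair := ({poly R[i]} * {poly R[i]})%type.

Definition rdeg (pq : rpair) : nat := (maxn (size pq.1) (size pq.2)).-1.

Definition isratpair (d : nat) (pq : rpair) : bool :=
  coprimep pq.1 pq.2 && (maxn (size pq.1) (size pq.2) == d.+1)%N.

Definition ratfun (pq : rpair) (z : Chat) : Chat :=
  match z with
  | Some a => if pq.2.[a] != 0 then Some (pq.1.[a] / pq.2.[a]) else None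
  | None => let d := rdeg pq in
            if pq.2`_d != 0 then Some (pq.1`_d / pq.2`_d) else None
  end.

(* local degree of the rational map pq at z: multiplicity of z as a
   solution of  f(zeta) = f(z)  (in the homogeneous sense at infinity) *)
Definition ldeg (pq : rpair) (z : Chat) : nat :=
  let g := match ratfun pq z with
           | Some w => pq.1 - w *: pq.2
           | None => pq.2
           end in
  match z with
  | Some a => mup a g
  | None => (rdeg pq - (size g).-1)%N
  end.

Definition isRat (d : nat) (f : Chat -> Chat) : Prop :=
  exists pq, isratpair d pq /\ f = ratfun pq.

Definition mobius (M : Chat -> Chat) : Prop := isRat 1 M.

Definition conjugate (h g : Chat -> Chat) : Prop :=
  exists M N, [/\ mobius M, mobius N, cancel M N, cancel N M &
                  h = M \o g \o N].

(* Open subsets of Rat_d (topology of Rat_d as an open subset of P^{2d+1}):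
   the set of coefficient vectors representing elements of U is open. *)
Definition rat_open (d : nat) (U : (Chat -> Chat) -> Prop) : Prop :=
  (forall g, U g -> isRat d g) /\
  (forall pq, isratpair d pq -> U (ratfun pq) ->
     exists2 eps : R, 0 < eps & forall pq', isratpair d pq' ->
       (forall i, (i <= d)%N -> sqn (pq'.1`_i - pq.1`_i) < eps /\
                                sqn (pq'.2`_i - pq.2`_i) < eps) ->
       U (ratfun pq')).

Definition saturated (U : (Chat -> Chat) -> Prop) : Prop :=
  forall g h, U g -> conjugate h g -> U h.

(* convergence of [f_n] to [g] in rat_d = Rat_d / PSL_2(C) with the
   quotient topology: open sets of rat_d = images of saturated open sets *)
Definition rat_cvg (d : nat) (fs : nat -> Chat -> Chat) (g : Chat -> Chat) : Prop :=
  forall U, rat_open d U -> saturated U -> U g ->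
    exists N, forall n, (N <= n)%N -> U (fs n).

End Sphere.

(* Trees of spheres.  All trees live in a common finite type U of vertices  *)
(* (so that the inclusions IV^X <= IV^Y etc. make sense); every internal    *)
(* sphere S_v is modelled as the projective sphere Chat itself, and the     *)
(* attaching map i_v : E_v -> S_v is  w |-> tatt v w  for the edge {v,w}.   *)
Record tos (U : finType) (R : realType) := Tos {
  tV : {set U};
  tE : rel U;
  tM : {set U};
  tatt : U -> U -> Chat R
}.

Section Trees.
Variables (U : finType) (R : realType).
Implicit Types (T : tos U R).

Definition valence T v : nat := #|[set w | tE T v w]|.

Definition restr T (S : {set U}) : rel U :=
  [rel x y | [&& tE T x y, x \in S & y \in S]].

Definition is_tree T : Prop :=
  [/\ symmetric (tE T), irreflexive (tE T),
      (forall x y, tE T x y -> (x \in tV T) && (y \in tV T)),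
      (forall x y, x \in tV T -> y \in tV T -> connect (tE T) x y) &
      (forall s : seq U, uniq s -> (3 <= size s)%N -> ~~ cycle (tE T) s)].

Definition internal T v : bool := (v \in tV T) && (v \notin tM T).

Definition is_tos T : Prop :=
  [/\ is_tree T,
      tM T = [set v in tV T | valence T v == 1%N],
      (3 <= #|tM T|)%N,
      (forall v, internal T v -> (3 <= valence T v)%N) &
      (forall v w w', internal T v -> tE T v w -> tE T v w' ->
          tatt T v w = tatt T v w' -> w = w')].

Definition in_branch T v w x : bool :=
  tE T v w && connect (restr T (tV T :\ v)) w x.

(* a_v(x) = a (as a relation: a_v(x) = i_v(e) for x in B_v(e)) *)
Definition attv T v x (a : Chat R) : Prop :=
  forall w, in_branch T v w x -> a = tatt T v w.

Definition Yv T v (z : Chat R) : Prop := exists2 w, tE T v w & z = tatt T v w.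

Definition separates T u a b c : bool :=
  let S := tV T :\ u in
  [&& a \in S, b \in S, c \in S,
      ~~ connect (restr T S) a b, ~~ connect (restr T S) a c &
      ~~ connect (restr T S) b c].

Definition compatible (TX TY : tos U R) : Prop :=
  [/\ tM TX \subset tM TY,
      (forall v, internal TX v -> internal TY v) &
      (forall u a b c, u \in tV TX -> a \in tV TX -> b \in tV TX -> c \in tV TX ->
          separates TX u a b c = separates TY u a b c)].

(* T^X <| T^Y  (the internal spheres are the same Chat) *)
Definition subtos (TX TY : tos U R) : Prop :=
  compatible TX TY /\
  forall v x w w', internal TX v -> x \in tM TX ->
    in_branch TX v w x -> in_branch TY v w' x -> tatt TX v w = tatt TY v w'.

(* Holomorphic covers F : T^Y -> T^Z.  cF is the map of vertices, and for   *)
(* an internal vertex v, cf v represents the rational map f_v.              *)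
Record tcover := TCover { cF : U -> U; cf : U -> rpair R }.

Definition is_cover (TY TZ : tos U R) (c : tcover) : Prop :=
  (((forall v, v \in tV TY -> cF c v \in tV TZ)) /\
  ((forall v w, tE TY v w -> tE TZ (cF c v) (cF c w))) /\
  ((forall x, x \in tM TY -> cF c x \in tM TZ)) /\
  ((forall v, internal TY v -> internal TZ (cF c v))) /\
  (
      (forall v, internal TY v -> ((1 <= rdeg (cf c v))%N /\ isratpair (rdeg (cf c v)) (cf c v)))) /\
  ((* f_v : S_v \ Y_v -> S_F(v) \ Z_F(v) is a covering (Z_w = Y_w of T^Z):
         no critical point off Y_v, and f_v^{-1}(Z_F(v)) is inside Y_v *)
      (forall v z, internal TY v ->
          (((1 < ldeg (cf c v) z)%N -> Yv TY v z) /\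
           (Yv TZ (cF c v) (ratfun (cf c v) z) -> Yv TY v z)))) /\
  (
      (forall v w, internal TY v -> tE TY v w ->
          ratfun (cf c v) (tatt TY v w) = tatt TZ (cF c v) (cF c w))) /\
  (
      (forall v w, internal TY v -> internal TY w -> tE TY v w ->
          ldeg (cf c v) (tatt TY v w) = ldeg (cf c w) (tatt TY w v)))).

Definition cover_degree (TY TZ : tos U R) (c : tcover) (d : nat) : Prop :=
  forall w, internal TZ w ->
    (\sum_(v in tV TY | internal TY v && (cF c v == w)) rdeg (cf c v))%N = d.

Definition dyn_system (d : nat) (TX TY TZ : tos U R) (c : tcover) : Prop :=
  ((is_tos TX) /\
  (is_tos TY) /\
  (is_tos TZ) /\
  (is_cover TY TZ c) /\
  (cover_degree TY TZ c d) /\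
  (tM TX \subset tM TY :&: tM TZ) /\
  (subtos TX TY) /\
  (subtos TX TZ)).

Definition leafdeg (TY : tos U R) (c : tcover) (a : U) : nat :=
  match [pick v | tE TY a v] with
  | Some v => ldeg (cf c v) (tatt TY v a)
  | None => 0%N
  end.

Definition is_portrait (d : nat) (TY TZ : tos U R) (c : tcover) : Prop :=
  [/\ (forall a, a \in tM TY -> (0 < leafdeg TY c a)%N),
      (\sum_(a in tM TY) (leafdeg TY c a - 1))%N = (d.*2 - 2)%N &
      (forall b, b \in tM TZ ->
         (\sum_(a in tM TY | cF c a == b) leafdeg TY c a)%N = d)].

Definition dyn_marked (d : nat) (TX TY TZ : tos U R) (c : tcover)
    (f : rpair R) (y z : U -> Chat R) : Prop :=
  ((isratpair d f) /\
  ({in tM TY &, injective y}) /\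
  ({in tM TZ &, injective z}) /\
  ((forall a, a \in tM TY -> ratfun f (y a) = z (cF c a))) /\
  ((forall a, a \in tM TY -> ldeg f (y a) = leafdeg TY c a)) /\
  (      (forall x, x \in tM TX -> y x = z x))).

Definition dyn_approx (d : nat) (TX TY TZ : tos U R) (c : tcover)
    (fn : nat -> rpair R) (yn zn : nat -> U -> Chat R) : Prop :=
  [/\ is_portrait d TY TZ c,
      (forall n, dyn_marked d TX TY TZ c (fn n) (yn n) (zn n)) &
      exists phiY psiY phiZ psiZ : nat -> U -> Chat R -> Chat R,
       [/\ (forall n v, internal TY v ->
              [/\ mobius (phiY n v), mobius (psiY n v),
                  cancel (phiY n v) (psiY n v) & cancel (psiY n v) (phiY n v)]),
           (forall n w, internal TZ w ->
              [/\ mobius (phiZ n w), mobius (psiZ n w),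
                  cancel (phiZ n w) (psiZ n w) & cancel (psiZ n w) (phiZ n w)]),
           (forall v, internal TY v ->
              [/\ (forall x a, x \in tM TY -> attv TY v x a ->
                     cvgC (fun n => phiY n v (yn n x)) a),
                  (forall x a, x \in tM TZ -> attv TZ (cF c v) x a ->
                     cvgC (fun n => phiZ n (cF c v) (zn n x)) a) &
                  lu_cvg_off (Yv TY v)
                    (fun n => phiZ n (cF c v) \o ratfun (fn n) \o psiY n v)
                    (ratfun (cf c v))]) &
           (forall n v, internal TX v -> phiY n v = phiZ n v)]].

End Trees.

(* Main.v *)
Require Import Defs.
From mathcomp Require Import all_boot all_order all_algebra.
From mathcomp Require Import reals.
From mathcomp Require Import ring lra zify.
From Stdlib Require Import FunctionalExtensionality ClassicalEpsilon.
Import Order.TTheory GRing.Theory Num.Theory.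
Set Implicit Arguments. Unset Strict Implicit. Unset Printing Implicit Defensive.
Local Open Scope ring_scope.
Section A. Variable R : realType.
Implicit Types x y : R[i].
Lemma sqn_ge0 x : 0 <= sqn x.
Proof. by rewrite /sqn addr_ge0 // sqr_ge0. Qed.
Lemma sqnM x y : sqn (x * y) = sqn x * sqn y.
Proof. case: x => a b; case: y => c d; rewrite /sqn /=. ring. Qed.
Lemma sqnD x y : sqn (x + y) <= 2 * (sqn x + sqn y).
Proof. case: x => a b; case: y => c d; rewrite /sqn /=.
have h1 := sqr_ge0 (a - c); have h2 := sqr_ge0 (b - d). nra. Qed.
Lemma sqnN x : sqn (- x) = sqn x.
Proof. case: x => a b; rewrite /sqn /=. ring. Qed.
Lemma sqn_eq0 x : sqn x = 0 -> x = 0.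
Proof. case: x => a b; rewrite /sqn /= => h.
have ha : a = 0 by nra. have hb : b = 0 by nra. by rewrite ha hb. Qed.
Lemma sqn0 : sqn (0 : R[i]) = 0.
Proof. by rewrite /sqn /= expr0n /= addr0. Qed.
Definition cvgK (a : nat -> R[i]) (b : R[i]) := forall eps : R, 0 < eps ->
  exists N, forall n, (N <= n)%N -> sqn (a n - b) < eps.

Lemma cvgK_cst b : cvgK (fun _ => b) b.
Proof. by move=> e e0; exists 0%N => n _; rewrite subrr sqn0. Qed.

Lemma cvgKD a b c d : cvgK a b -> cvgK c d -> cvgK (fun n => a n + c n) (b + d).
Proof.
move=> ha hc e e0; have e4 : 0 < e / 4 by rewrite divr_gt0.
have [N1 h1] := ha _ e4; have [N2 h2] := hc _ e4.
exists (maxn N1 N2) => n; rewrite geq_max => /andP[n1 n2].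
have := sqnD (a n - b) (c n - d).
have -> : a n - b + (c n - d) = a n + c n - (b + d) by ring.
have := h1 _ n1; have := h2 _ n2; lra.
Qed.

Lemma cvgKN a b : cvgK a b -> cvgK (fun n => - a n) (- b).
Proof. move=> ha e e0; have [N h] := ha _ e0; exists N => n hn.
by rewrite -opprD sqnN; apply: h. Qed.

Lemma sqn_bound a b : cvgK a b -> exists N, forall n, (N <= n)%N -> sqn (a n) <= 2 * (1 + sqn b).
Proof.
move=> ha; have [N h] := ha 1 ltr01; exists N => n hn.
have := sqnD (a n - b) b; rewrite subrK; have := h _ hn; have := sqn_ge0 b; lra.
Qed.

Lemma cvgKM a b c d : cvgK a b -> cvgK c d -> cvgK (fun n => a n * c n) (b * d).
Proof.
move=> ha hc e e0.
have [N0 h0] := sqn_bound hc.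
set B := 2 * (1 + sqn d).
have B0 : 0 < B by rewrite /B; have := sqn_ge0 d; lra.
have Bb : 0 < 1 + sqn b by have := sqn_ge0 b; lra.
have e1 : 0 < e / (8 * B) by rewrite divr_gt0 // mulr_gt0.
have e2 : 0 < e / (8 * (1 + sqn b)) by rewrite divr_gt0 // mulr_gt0.
have [N1 h1] := ha _ e1; have [N2 h2] := hc _ e2.
exists (maxn N0 (maxn N1 N2)) => n; rewrite !geq_max => /and3P[n0 n1 n2].
have -> : a n * c n - b * d = (a n - b) * c n + b * (c n - d) by ring.
have := sqnD ((a n - b) * c n) (b * (c n - d)); rewrite !sqnM.
have s1 := h1 _ n1; have s2 := h2 _ n2; have s0 := h0 _ n0.
have q1 : sqn (a n - b) * sqn (c n) <= e / (8 * B) * B.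
  apply: ler_pM; [exact: sqn_ge0|exact: sqn_ge0|exact: ltW|exact: s0].
have q2 : sqn b * sqn (c n - d) <= (1 + sqn b) * (e / (8 * (1 + sqn b))).
  apply: ler_pM; [exact: sqn_ge0|exact: sqn_ge0|lra|exact: ltW].
have r1 : e / (8 * B) * B = e / 8 by field; lra.
have r2 : (1 + sqn b) * (e / (8 * (1 + sqn b))) = e / 8 by field; lra.
lra.
Qed.
Lemma cvgK_ext a a' b : (forall n, a n = a' n) -> cvgK a b -> cvgK a' b.
Proof. by move=> e h eps /h [N hN]; exists N => n /hN; rewrite e. Qed.

Lemma cvgK_sum (I : Type) (r : seq I) (P : pred I) (F : nat -> I -> R[i]) G :
  (forall i, cvgK (fun n => F n i) (G i)) ->
  cvgK (fun n => \sum_(i <- r | P i) F n i) (\sum_(i <- r | P i) G i).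
Proof.
move=> h; elim: r => [|x r IH].
  by rewrite big_nil; apply: cvgK_ext (cvgK_cst _) => n; rewrite big_nil.
rewrite big_cons; apply: (@cvgK_ext (fun n => if P x then F n x + \sum_(i <- r | P i) F n i else \sum_(i <- r | P i) F n i)).
  by move=> n; rewrite big_cons.
case: (P x) => //; exact: cvgKD.
Qed.

Lemma cvgK_prod (I : Type) (r : seq I) (P : pred I) (F : nat -> I -> R[i]) G :
  (forall i, cvgK (fun n => F n i) (G i)) ->
  cvgK (fun n => \prod_(i <- r | P i) F n i) (\prod_(i <- r | P i) G i).
Proof.
move=> h; elim: r => [|x r IH].
  by rewrite big_nil; apply: cvgK_ext (cvgK_cst _) => n; rewrite big_nil.
rewrite big_cons; apply: (@cvgK_ext (fun n => if P x then F n x * \prod_(i <- r | P i) F n i else \prod_(i <- r | P i) F n i)).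
  by move=> n; rewrite big_cons.
case: (P x) => //; exact: cvgKM.
Qed.

Lemma cvgK_det m (A : nat -> 'M[R[i]]_m) (B : 'M[R[i]]_m) :
  (forall i j, cvgK (fun n => A n i j) (B i j)) ->
  cvgK (fun n => \det (A n)) (\det B).
Proof.
move=> h; rewrite /determinant; apply: cvgK_sum => s.
apply: cvgKM; first exact: cvgK_cst.
by apply: cvgK_prod => i; apply: h.
Qed.

Lemma cvgK_mulmx m n p (A : nat -> 'M[R[i]]_(m, n)) (B : nat -> 'M[R[i]]_(n, p)) (A0 : 'M[R[i]]_(m, n)) (B0 : 'M[R[i]]_(n, p)) :
  (forall i j, cvgK (fun k => A k i j) (A0 i j)) ->
  (forall i j, cvgK (fun k => B k i j) (B0 i j)) ->
  forall i j, cvgK (fun k => (A k *m B k) i j) ((A0 *m B0) i j).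
Proof.
move=> hA hB i j; rewrite mxE; apply: cvgK_ext; first by move=> k; rewrite mxE.
by apply: cvgK_sum => l; apply: cvgKM.
Qed.

Lemma cvgK_adj m (A : nat -> 'M[R[i]]_m) (B : 'M[R[i]]_m) :
  (forall i j, cvgK (fun n => A n i j) (B i j)) ->
  forall i j, cvgK (fun n => \adj (A n) i j) (\adj B i j).
Proof.
move=> h i j; rewrite mxE /cofactor; apply: cvgK_ext; first by move=> n; rewrite mxE.
apply: cvgKM; first exact: cvgK_cst.
apply: cvgK_det => k l; rewrite !mxE; apply: cvgK_ext; first by move=> n; rewrite !mxE.
exact: h.
Qed.
Section Ker.
Variable m : nat.
Implicit Types (M : 'M[R[i]]_(m, m.+1)) (k : 'I_m.+1).

Definition zins k (c : R[i]) (u : 'cV[R[i]]_m) : 'cV[R[i]]_m.+1 :=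
  \col_i (match unlift k i with Some j => u j 0 | None => c end).

Lemma zins_k k c u : zins k c u k 0 = c.
Proof. by rewrite mxE unlift_none. Qed.

Lemma zins_lift k c u j : zins k c u (lift k j) 0 = u j 0.
Proof. by rewrite mxE liftK. Qed.

Lemma zins_decomp k (x : 'cV[R[i]]_m.+1) : x = zins k (x k 0) (row' k x).
Proof.
apply/matrixP => i j; rewrite (ord1 j) mxE.
by case: unliftP => [l ->|->]; rewrite ?mxE.
Qed.

Lemma mul_zins M k c u : M *m zins k c u = c *: col k M + col' k M *m u.
Proof.
apply/matrixP => r j; rewrite (ord1 j) !mxE (bigD1_ord k) //= zins_k mulrC; congr (_ + _).
by apply: eq_bigr => i _; rewrite zins_lift !mxE.
Qed.

Lemma ker_trivial M k (x : 'cV_m.+1) :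
  \det (col' k M) != 0 -> M *m x = 0 -> x k 0 = 0 -> x = 0.
Proof.
move=> hd hx hk.
have ex : x = zins k 0 (row' k x) by rewrite {1}(zins_decomp k x) hk.
rewrite ex mul_zins scale0r add0r in hx.
have hu : col' k M \in unitmx by rewrite unitmxE unitfE.
have h0 : row' k x = 0 by rewrite -(mulKmx hu (row' k x)) hx mulmx0.
rewrite ex h0; apply/matrixP => i j; rewrite !mxE.
by case: unlift => [l|]; rewrite ?mxE.
Qed.

Definition kvec M k : 'cV[R[i]]_m.+1 :=
  zins k (\det (col' k M)) (\adj (col' k M) *m (- col k M)).

Lemma kvec_ker M k : M *m kvec M k = 0.
Proof.
rewrite /kvec mul_zins mulmxA mul_mx_adj mul_scalar_mx scalerN.
by rewrite addrN.
Qed.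

Lemma kvec_k M k : kvec M k k 0 = \det (col' k M).
Proof. exact: zins_k. Qed.

Lemma kvec_cvg (Mn : nat -> 'M[R[i]]_(m, m.+1)) M k :
  (forall r j, cvgK (fun n => Mn n r j) (M r j)) ->
  forall i, cvgK (fun n => kvec (Mn n) k i 0) (kvec M k i 0).
Proof.
move=> h i; have hc : forall r j, cvgK (fun n => col' k (Mn n) r j) (col' k M r j).
  by move=> r j; rewrite mxE; apply: cvgK_ext (h _ _) => n; rewrite mxE.
rewrite /kvec !mxE; apply: cvgK_ext; first by move=> n; rewrite !mxE.
case: unlift => [l|]; last exact: cvgK_det.
apply: cvgK_mulmx; first exact: cvgK_adj.
move=> r j; rewrite !mxE; apply: cvgK_ext; first by move=> n; rewrite !mxE.
exact/cvgKN/h.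
Qed.

Lemma kernel_cvg (Mn : nat -> 'M[R[i]]_(m, m.+1)) M (v : 'cV_m.+1) (xn : nat -> 'cV_m.+1) :
  (forall r j, cvgK (fun n => Mn n r j) (M r j)) ->
  v != 0 -> (forall x : 'cV_m.+1, M *m x = 0 -> exists c, x = c *: v) ->
  (exists N, forall n, (N <= n)%N -> xn n != 0 /\ Mn n *m xn n = 0) ->
  forall eps, 0 < eps -> exists N, forall n, (N <= n)%N ->
    exists2 c, c != 0 & forall i, sqn (c * xn n i 0 - v i 0) < eps.
Proof.
move=> hM v0 hker [N0 hx] eps e0.
have [k vk] : exists k, v k 0 != 0.
  apply/existsP; apply: contraR v0 => /existsPn h; apply/eqP/matrixP => i j.
  by rewrite (ord1 j) mxE; apply/eqP; have := h i; rewrite negbK.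
have hD : \det (col' k M) != 0.
  apply/negP; rewrite -det_tr => /det0P [w w0 hw].
  have hw' : M *m zins k 0 w^T = 0.
    by rewrite mul_zins scale0r add0r -(trmxK (col' k M)) -trmx_mul hw trmx0.
  have [c hc] := hker _ hw'.
  have : c * v k 0 = 0 by have := zins_k k 0 w^T; rewrite hc mxE.
  move/eqP; rewrite mulf_eq0 (negPf vk) orbF => /eqP c0.
  move: hc; rewrite c0 scale0r => hz.
  apply/negP: w0; rewrite negbK; apply/eqP/matrixP => i j.
  by rewrite (ord1 i) !mxE; have := zins_lift k 0 w^T j; rewrite hz !mxE => <-.
have [l hl] := hker _ (kvec_ker M k).
have l0 : l != 0.
  by apply: contra hD => /eqP l0; rewrite -kvec_k hl l0 scale0r mxE.
have hcv : forall i, cvgK (fun n => l^-1 * kvec (Mn n) k i 0) (v i 0).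
  move=> i; have -> : v i 0 = l^-1 * kvec M k i 0.
    by rewrite hl mxE mulrA mulVf // mul1r.
  by apply: cvgKM; [exact: cvgK_cst|exact: kvec_cvg].
have [f hf] := fin_all_exists (fun i => hcv i eps e0).
have hDn : cvgK (fun n => \det (col' k (Mn n))) (\det (col' k M)).
  by apply: cvgK_det => r j; rewrite mxE; apply: cvgK_ext (hM _ _) => n; rewrite mxE.
have sD : 0 < sqn (\det (col' k M)).
  rewrite lt_def sqn_ge0 andbT; apply/eqP => /sqn_eq0 /eqP; exact/negP.
have [N1 hN1] := hDn _ sD.
exists (maxn N0 (maxn N1 (\max_i f i))) => n; rewrite !geq_max => /and3P [n0 n1 n2].
have [xn0 hxn] := hx _ n0.
have Dn : \det (col' k (Mn n)) != 0.
  apply/eqP => e; move: (hN1 _ n1); rewrite e sub0r sqnN; lra.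
have xk : xn n k 0 != 0.
  by apply: contra xn0 => /eqP e; apply/eqP; apply: (ker_trivial Dn hxn e).
set z := kvec (Mn n) k.
have hz : z = (z k 0 / xn n k 0) *: xn n.
  apply/eqP; rewrite -subr_eq0; apply/eqP; apply: (ker_trivial Dn).
    by rewrite mulmxBr kvec_ker -scalemxAr hxn scaler0 subr0.
  by rewrite !mxE mulrVK ?unitfE // subrr.
exists (l^-1 * (z k 0 / xn n k 0)).
  by rewrite !mulf_neq0 ?invr_eq0 // /z kvec_k.
move=> i; have hze : z k 0 / xn n k 0 * xn n i 0 = z i 0.
  by rewrite [in RHS]hz [RHS]mxE.
rewrite -mulrA hze; apply: hf.
by apply: leq_trans n2; apply: (leq_bigmax i).
Qed.
End Ker.
End A.

Section B. Variable R : realType.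
Local Notation K := (R[i]).
Implicit Types (p q : {poly K}).

Lemma coef_top_mul p q m n : (size p <= m.+1)%N -> (size q <= n.+1)%N ->
  (p * q)`_(m + n) = p`_m * q`_n.
Proof.
move=> hp hq.
have [hp'|hp'] := ltnP (size p) m.+1.
  rewrite (nth_default 0 hp') mul0r nth_default //.
  apply: leq_trans (size_mul_leq _ _) _; rewrite -subn1 leq_subLR.
  by rewrite add1n -addnS; exact: leq_add.
have [hq'|hq'] := ltnP (size q) n.+1.
  rewrite (nth_default 0 hq') mulr0 nth_default //.
  apply: leq_trans (size_mul_leq _ _) _; rewrite -subn1 leq_subLR.
  by rewrite add1n -addSn; exact: leq_add.
have sp : size p = m.+1 by apply/eqP; rewrite eqn_leq hp.
have sq : size q = n.+1 by apply/eqP; rewrite eqn_leq hq.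
have := mul_lead_coef p q; rewrite /lead_coef sp sq /= => ->.
by rewrite addnS.
Qed.

Lemma coef_top_exp p dd i : (size p <= dd.+1)%N ->
  (p ^+ i)`_(i * dd) = p`_dd ^+ i /\ (size (p ^+ i) <= (i * dd).+1)%N.
Proof.
move=> hp; elim: i => [|i [IH1 IH2]].
  by rewrite !expr0 mul0n coefC size_poly1.
split; first by rewrite exprS mulSn coef_top_mul // IH1 exprS.
rewrite exprS mulSn; apply: leq_trans (size_mul_leq _ _) _.
rewrite -subn1 leq_subLR add1n; apply: leq_trans (leq_add hp IH2) _.
by rewrite addnS.
Qed.

Definition hev p (e : nat) (x y : K) : K := \sum_(i < e.+1) p`_i * x ^+ i * y ^+ (e - i).

Definition hcomp p (e : nat) (S T : {poly K}) : {poly K} :=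
  \sum_(i < e.+1) p`_i *: (S ^+ i * T ^+ (e - i)).

Lemma hcomp_horner p e (S T : {poly K}) a : (hcomp p e S T).[a] = hev p e S.[a] T.[a].
Proof.
rewrite /hcomp /hev horner_sum; apply: eq_bigr => i _.
by rewrite hornerZ hornerM !horner_exp mulrA.
Qed.

Lemma hev_y p e x y : (size p <= e.+1)%N -> y != 0 -> hev p e x y = y ^+ e * p.[x / y].
Proof.
move=> hp y0; rewrite (horner_coef_wide _ hp) mulr_sumr /hev; apply: eq_bigr => i _.
have hi : (i <= e)%N by rewrite -ltnS.
have -> : y ^+ e = y ^+ i * y ^+ (e - i) by rewrite -exprD subnKC.
rewrite exprMn exprVn.
have yi : y ^+ i != 0 by rewrite expf_neq0.
by field.
Qed.

Lemma hev_0 p e x : hev p e x 0 = p`_e * x ^+ e.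
Proof.
rewrite /hev big_ord_recr /= subnn expr0 mulr1 big1 ?add0r // => i _.
by rewrite expr0n subn_eq0 leqNgt ltn_ord /= mulr0.
Qed.

Lemma coef_hcomp p e (S T : {poly K}) dd : (size S <= dd.+1)%N -> (size T <= dd.+1)%N ->
  (hcomp p e S T)`_(e * dd) = hev p e S`_dd T`_dd /\
  (size (hcomp p e S T) <= (e * dd).+1)%N.
Proof.
move=> hS hT; split.
  rewrite /hcomp coef_sum /hev; apply: eq_bigr => i _.
  have hi : (i <= e)%N by rewrite -ltnS.
  have -> : (e * dd = i * dd + (e - i) * dd)%N by rewrite -mulnDl subnKC.
  have [h1 s1] := coef_top_exp i hS; have [h2 s2] := coef_top_exp (e - i) hT.
  by rewrite coefZ coef_top_mul // h1 h2 mulrA.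
rewrite /hcomp; apply: leq_trans (size_sum _ _ _) _.
apply/bigmax_leqP => i _.
have hi : (i <= e)%N by rewrite -ltnS.
apply: leq_trans (size_scale_leq _ _) _.
have [h1 s1] := coef_top_exp i hS; have [h2 s2] := coef_top_exp (e - i) hT.
apply: leq_trans (size_mul_leq _ _) _.
rewrite -subn1 leq_subLR add1n; apply: leq_trans (leq_add s1 s2) _.
by rewrite addSn addnS -mulnDl subnKC.
Qed.
Implicit Types (PQ ST : rpair R).

Lemma isratpairP e PQ : isratpair e PQ ->
  [/\ (size PQ.1 <= e.+1)%N, (size PQ.2 <= e.+1)%N, coprimep PQ.1 PQ.2 &
      (PQ.1`_e != 0) || (PQ.2`_e != 0)].
Proof.
case: PQ => P Q /andP [cp /eqP hm] /=.
split => //; first by rewrite -hm leq_maxl.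
  by rewrite -hm leq_maxr.
have [h|h] := leqP (size P) (size Q).
  move: hm; rewrite (maxn_idPr h) => hq; apply/orP; right.
  have -> : e = (size Q).-1 by rewrite hq.
  by rewrite -/(lead_coef Q) lead_coef_eq0 -size_poly_eq0 hq.
move: hm; rewrite (maxn_idPl (ltnW h)) => hp; apply/orP; left.
have -> : e = (size P).-1 by rewrite hp.
by rewrite -/(lead_coef P) lead_coef_eq0 -size_poly_eq0 hp.
Qed.

Lemma coef_neq0_size (p : {poly K}) e : p`_e != 0 -> (e < size p)%N.
Proof. by apply: contraR; rewrite -leqNgt => h; rewrite nth_default. Qed.

Lemma isratpairI e PQ : (size PQ.1 <= e.+1)%N -> (size PQ.2 <= e.+1)%N ->
  coprimep PQ.1 PQ.2 -> (PQ.1`_e != 0) || (PQ.2`_e != 0) -> isratpair e PQ.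
Proof.
case: PQ => P Q /= h1 h2 cp hc; rewrite /isratpair cp /=; rewrite eqn_leq geq_max h1 h2 /=.
case/orP: hc => /coef_neq0_size h; first by rewrite leq_max h.
by rewrite leq_max h orbT.
Qed.

Lemma rdeg_rat e PQ : isratpair e PQ -> rdeg PQ = e.
Proof. by case/andP => _ /eqP h; rewrite /rdeg h. Qed.

Lemma hev_nonvanish e PQ x y : isratpair e PQ -> (x != 0) || (y != 0) ->
  (hev PQ.1 e x y != 0) || (hev PQ.2 e x y != 0).
Proof.
move=> /isratpairP [s1 s2 cp hc] hxy.
have [y0|y0] := eqVneq y 0.
  rewrite y0 !hev_0; move: hxy; rewrite y0 eqxx orbF => x0.
  by rewrite !mulf_eq0 !expf_eq0 (negPf x0) !andbF !orbF.
rewrite !hev_y // !mulf_eq0 !expf_eq0 (negPf y0) !andbF /=.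
apply: contraT => /norP [/negPn h1 /negPn h2].
by have := coprimep_root cp h1; rewrite (eqP h2) eqxx.
Qed.

Lemma hev_ratfun e PQ x y : isratpair e PQ -> (x != 0) || (y != 0) ->
  (if hev PQ.2 e x y != 0 then Some (hev PQ.1 e x y / hev PQ.2 e x y) else None)
  = ratfun PQ (if y != 0 then Some (x / y) else None).
Proof.
move=> hr hxy; have [s1 s2 cp hc] := isratpairP hr.
have [y0|y0] := eqVneq y 0.
  rewrite y0 !hev_0 /= (rdeg_rat hr); move: hxy; rewrite y0 eqxx orbF => x0.
  rewrite mulf_eq0 expf_eq0 (negPf x0) andbF orbF.
  case: ifP => // q0; congr Some.
  have xe : x ^+ e != 0 by rewrite expf_neq0.
  by field; rewrite q0 xe.
rewrite !hev_y //= mulf_eq0 expf_eq0 (negPf y0) andbF /=.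
case: ifP => // q0; congr Some.
have ye : y ^+ e != 0 by rewrite expf_neq0.
by field; rewrite q0 ye.
Qed.

Definition pcomp PQ ST : rpair R :=
  (hcomp PQ.1 (rdeg PQ) ST.1 ST.2, hcomp PQ.2 (rdeg PQ) ST.1 ST.2).

Lemma pcomp_ok e dd PQ ST : isratpair e PQ -> isratpair dd ST ->
  isratpair (e * dd) (pcomp PQ ST) /\
  forall z, ratfun (pcomp PQ ST) z = ratfun PQ (ratfun ST z).
Proof.
move=> hPQ hST; have [s1 s2 cp hc] := isratpairP hST.
have [c1 z1] := coef_hcomp PQ.1 e s1 s2.
have [c2 z2] := coef_hcomp PQ.2 e s1 s2.
have hrat : isratpair (e * dd) (pcomp PQ ST).
  apply: isratpairI; rewrite /pcomp /= (rdeg_rat hPQ) //.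
    apply: Pdiv.ClosedField.root_coprimep => a; rewrite /root !hcomp_horner => h.
    have hST' : (ST.1.[a] != 0) || (ST.2.[a] != 0).
      have [h0|h0] := eqVneq ST.1.[a] 0; last by [].
      by rewrite (coprimep_root cp) ?orbT // /root h0.
    by have := hev_nonvanish hPQ hST'; rewrite h.
  by rewrite c1 c2; apply: hev_nonvanish.
split=> // -[a|].
  rewrite /= !hcomp_horner (rdeg_rat hPQ).
  have hST' : (ST.1.[a] != 0) || (ST.2.[a] != 0).
    have [h0|h0] := eqVneq ST.1.[a] 0; last by [].
    by rewrite (coprimep_root cp) ?orbT // /root h0.
  exact: hev_ratfun.
rewrite [ratfun (pcomp _ _) _]/ratfun (rdeg_rat hrat) /pcomp /= (rdeg_rat hPQ) c1 c2.
rewrite (rdeg_rat hST).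
exact: hev_ratfun.
Qed.

Lemma scale_ok e PQ (c : K) : c != 0 -> isratpair e PQ ->
  isratpair e (c *: PQ.1, c *: PQ.2) /\ forall z, ratfun (c *: PQ.1, c *: PQ.2) z = ratfun PQ z.
Proof.
move=> c0 hr; have [s1 s2 cp hc] := isratpairP hr.
have hr' : isratpair e (c *: PQ.1, c *: PQ.2).
  apply: isratpairI; rewrite /= ?size_scale ?coprimepZl ?coprimepZr //.
  by rewrite !coefZ !mulf_eq0 (negPf c0).
split=> // -[a|] /=.
  rewrite !hornerZ mulf_eq0 (negPf c0) /=; case: ifP => // h; congr Some.
  by field; rewrite h c0.
rewrite (rdeg_rat hr') (rdeg_rat hr) !coefZ mulf_eq0 (negPf c0) /=.
case: ifP => // h; congr Some; by field; rewrite h c0.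
Qed.
End B.

Section C. Variable R : realType.
Local Notation K := (R[i]).
Lemma natr_injK : injective (fun k : nat => (k%:R : K)).
Proof. by move=> a b /eqP; rewrite eqr_nat => /eqP. Qed.

Lemma choose_points (H : {poly K}) m : H != 0 ->
  exists w : 'I_m -> K, injective w /\ forall j, H.[w j] != 0.
Proof.
move=> H0; set s := iota 0 (m + size H).
set gl := [seq k <- s | H.[k%:R] != 0].
set bl := [seq k <- s | ~~ (H.[k%:R] != 0)].
have hb : (size bl < size H)%N.
  rewrite -(size_map (fun k : nat => (k%:R : K))); apply: max_poly_roots => //.
    by apply/allP => x /mapP [k]; rewrite mem_filter negbK => /andP [/eqP h _] ->; rewrite /root h.
  by rewrite map_inj_uniq ?filter_uniq ?iota_uniq //; exact: natr_injK.
have hg : (m <= size gl)%N.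
  have := count_predC (fun k : nat => H.[k%:R] != 0) s.
  rewrite size_iota -!size_filter -/gl => e.
  have : (size gl + size bl = m + size H)%N by rewrite -e.
  move: hb; lia.
exists (fun j => (nth 0%N gl j)%:R); split.
  move=> j1 j2 /natr_injK /eqP; rewrite nth_uniq ?filter_uniq ?iota_uniq //.
  - by move/eqP/val_inj.
  - exact: leq_trans (ltn_ord _) hg.
  - exact: leq_trans (ltn_ord _) hg.
move=> j; have : nth 0%N gl j \in gl by apply: mem_nth; exact: leq_trans (ltn_ord _) hg.
by rewrite mem_filter => /andP [].
Qed.

Lemma chord_conv (xs : nat -> Chat R) (b : K) : cvgC xs (Some b) ->
  (exists N, forall n, (N <= n)%N -> xs n != None) /\
  cvgK (fun n => odflt 0 (xs n)) b.
Proof.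
move=> h; set B := 1 + sqn b.
have B1 : 1 <= B by rewrite /B; have := sqn_ge0 b; lra.
have key : forall eps, 0 < eps -> exists N, forall n, (N <= n)%N ->
    exists2 x, xs n = Some x & sqn (x - b) < eps.
  move=> eps e0; set e' := Num.min eps 1.
  have e'0 : 0 < e' by rewrite lt_min e0 ltr01.
  have e'1 : e' <= 1 by rewrite ge_min lexx orbT.
  have e'e : e' <= eps by rewrite ge_min lexx.
  have BB : 0 < 4 * B ^+ 2 by rewrite mulr_gt0 // exprn_gt0 //; lra.
  have dl0 : 0 < e' / (4 * B ^+ 2) by rewrite divr_gt0.
  have [N hN] := h _ dl0; exists N => n /hN.
  have dlB : e' / (4 * B ^+ 2) * (4 * B ^+ 2) = e' by field; lra.
  case: (xs n) => [x|] /=.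
    move=> hc; exists x => //.
    set s := sqn (x - b); have s0 : 0 <= s := sqn_ge0 _.
    have hx : sqn x <= 2 * (s + sqn b) by have := sqnD (x - b) b; rewrite subrK.
    have hxB : 0 < (1 + sqn x) * B by rewrite mulr_gt0 //; have := sqn_ge0 x; lra.
    move: hc; rewrite -/(sqn (x - b)) -/s -/B.
    rewrite ltr_pdivrMr // => hc.
    have h1 : s < e' / (4 * B ^+ 2) * (2 * B * B + 2 * s * B).
      apply: lt_le_trans hc _; apply: ler_wpM2l; first exact: ltW.
      rewrite /B; have := sqn_ge0 b; nra.
    set dl := e' / (4 * B ^+ 2) in dlB h1 dl0.
    have h2 : dl * (4 * B ^+ 2) <= 1 by rewrite dlB.
    have h3 : dl * B <= 1/4.
      have : dl * (4 * B ^+ 2) = 4 * B * (dl * B) by rewrite expr2; ring.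
      nra.
    have h4 : s * (1 - 2 * dl * B) < 2 * dl * B * B by nra.
    have h5 : s < 4 * dl * B * B by nra.
    have : 4 * dl * B * B = e' by rewrite -dlB expr2; ring.
    lra.
  rewrite /chord2 -/B => hc; exfalso.
  move: hc; rewrite -(ltr_pM2r BB) dlB.
  have dB : 1 / B * (4 * B ^+ 2) = 4 * B by field; lra.
  rewrite dB; lra.
split.
  have [N hN] := key 1 ltr01; exists N => n /hN [x -> _] //.
move=> eps /key [N hN]; exists N => n /hN [x -> hx] //.
Qed.
Section Interp.
Variable d : nat.
Local Notation m := (d + d.+1)%N.

Definition vecp (S T : {poly K}) : 'cV[K]_(d.+1 + d.+1) :=
  col_mx (\col_(i < d.+1) S`_i) (\col_(i < d.+1) T`_i).

Definition pairv (x : 'cV[K]_(d.+1 + d.+1)) : rpair R :=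
  (\poly_(i < d.+1) x (lshift _ (inord i)) 0, \poly_(i < d.+1) x (rshift _ (inord i)) 0).

Lemma vecp_pairv x : vecp (pairv x).1 (pairv x).2 = x.
Proof.
rewrite -[RHS]vsubmxK /vecp; congr col_mx; apply/matrixP => i j;
by rewrite (ord1 j) !mxE coef_poly ltn_ord inord_val.
Qed.

Lemma vecpZ (c : K) (S T : {poly K}) : vecp (c *: S) (c *: T) = c *: vecp S T.
Proof.
rewrite /vecp scale_col_mx; congr col_mx; apply/matrixP => i j;
by rewrite !mxE coefZ.
Qed.

Lemma vecp_u (S T : {poly K}) (i : 'I_d.+1) : vecp S T (lshift _ i) 0 = S`_i.
Proof. by rewrite col_mxEu mxE. Qed.
Lemma vecp_d (S T : {poly K}) (i : 'I_d.+1) : vecp S T (rshift _ i) 0 = T`_i.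
Proof. by rewrite col_mxEd mxE. Qed.

Lemma vecp_neq0 PQ : isratpair d PQ -> vecp PQ.1 PQ.2 != 0.
Proof.
case/isratpairP => _ _ _ hc; apply/negP => /eqP h0.
have := vecp_u PQ.1 PQ.2 ord_max; have := vecp_d PQ.1 PQ.2 ord_max.
by rewrite h0 !mxE /= => h1 h2; move: hc; rewrite -h1 -h2 eqxx.
Qed.

Definition Vm (w : 'I_m -> K) (b : 'I_m -> K) : 'M[K]_(m, d.+1 + d.+1) :=
  row_mx (\matrix_(j < m, i < d.+1) w j ^+ i) (- \matrix_(j < m, i < d.+1) (b j * w j ^+ i)).

Lemma Vm_vecp w b (S T : {poly K}) j : (size S <= d.+1)%N -> (size T <= d.+1)%N ->
  (Vm w b *m vecp S T) j 0 = S.[w j] - b j * T.[w j].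
Proof.
move=> hS hT; rewrite /Vm /vecp mul_row_col mulNmx !mxE.
rewrite (horner_coef_wide _ hS) (horner_coef_wide _ hT) mulr_sumr; congr (_ - _).
  by apply: eq_bigr => i _; rewrite !mxE mulrC.
by apply: eq_bigr => i _; rewrite !mxE; ring.
Qed.

Lemma ker_limit (w : 'I_m -> K) PQ : injective w -> isratpair d PQ ->
  (forall j, PQ.2.[w j] != 0) ->
  forall x, Vm w (fun j => PQ.1.[w j] / PQ.2.[w j]) *m x = 0 ->
  exists c, x = c *: vecp PQ.1 PQ.2.
Proof.
move=> winj hr hQ x hx.
have [s1 s2 cp hc] := isratpairP hr.
case: PQ hr hQ hx s1 s2 cp hc => P Q /= hr hQ hx s1 s2 cp hc.
rewrite -(vecp_pairv x) in hx *.
set S := (pairv x).1 in hx *; set T := (pairv x).2 in hx *.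
have sS : (size S <= d.+1)%N by exact: size_poly.
have sT : (size T <= d.+1)%N by exact: size_poly.
have hj : forall j, S.[w j] = P.[w j] / Q.[w j] * T.[w j].
  move=> j; have := Vm_vecp w (fun j => P.[w j] / Q.[w j]) j sS sT.
  by rewrite hx mxE => /esym/eqP; rewrite subr_eq0 => /eqP.
have Q0 : Q != 0.
  by apply/eqP => Q0; move: (hQ (rshift d ord0)); rewrite Q0 horner0 eqxx.
set D := P * T - S * Q.
have D0 : D = 0.
  apply: contraTeq isT => D0.
  have hs : (size D <= m)%N.
    apply: leq_trans (size_add _ _) _; rewrite size_opp geq_max.
    have hm : forall p q : {poly K}, (size p <= d.+1)%N -> (size q <= d.+1)%N ->
        (size (p * q)%R <= m)%N.
      move=> p q hp hq; apply: leq_trans (size_mul_leq _ _) _.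
      by rewrite -subn1 leq_subLR add1n -addSn; exact: leq_add.
    by rewrite !hm.
  have := @max_poly_roots _ D [seq w j | j <- enum 'I_m] D0.
  rewrite size_map size_enum_ord map_inj_uniq ?enum_uniq //.
  have -> : all (root D) [seq w j | j <- enum 'I_m].
    apply/allP => z /mapP [j _ ->]; rewrite /root /D !hornerE hj.
    by apply/eqP; field.
  by move=> /(_ isT isT); rewrite ltnNge hs.
have hPT : P * T = S * Q by apply/eqP; rewrite -subr_eq0 -/D D0.
have dv : Q %| T.
  rewrite -(Gauss_dvdpr _ (d:=Q) (q:=P)); last by rewrite coprimep_sym.
  by rewrite hPT dvdp_mull.
set k := T %/ Q.
have hT : T = k * Q by rewrite divpK.
have hS : S = P * k.
  apply: (mulIf Q0); rewrite -hPT hT; ring.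
have sk : (size k <= 1)%N.
  rewrite leqNgt; apply/negP => sk.
  have k0 : k != 0 by rewrite -size_poly_gt0 (ltn_trans _ sk).
  case/orP: hc => hc.
    have P0 : P != 0 by apply: contraNneq hc => ->; rewrite coef0.
    have := sS; rewrite hS size_mul // leqNgt; apply/negP.
    have := coef_neq0_size hc; rewrite negbK -subn1 => h; move: sk h; move: (size k) (size P) => a b; lia.
  have := sT; rewrite hT size_mul // leqNgt; apply/negP.
  have := coef_neq0_size hc; rewrite negbK -subn1 => h; move: sk h; move: (size k) (size Q) => a b; lia.
exists k`_0.
rewrite -vecpZ hS hT (size1_polyC sk) mul_polyC mulrC mul_polyC.
by rewrite coefC.
Qed.

Lemma Vm_cvg (w : 'I_m -> K) (bn : nat -> 'I_m -> K) b :
  (forall j, cvgK (fun n => bn n j) (b j)) ->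
  forall r j, cvgK (fun n => Vm w (bn n) r j) (Vm w b r j).
Proof.
move=> hb r j; rewrite /Vm -(splitK j); case: (split j) => l /=.
  by rewrite row_mxEl; apply: cvgK_ext (cvgK_cst _) => n; rewrite row_mxEl !mxE.
rewrite row_mxEr !mxE; apply: cvgK_ext; first by move=> n; rewrite row_mxEr !mxE.
by apply/cvgKN/cvgKM; [exact: hb|exact: cvgK_cst].
Qed.

Lemma Q_neq0 (PQ : rpair R) : (0 < d)%N -> isratpair d PQ -> PQ.2 != 0.
Proof.
move=> d0 /andP [cp /eqP hm]; apply/eqP => Q0.
move: cp hm; rewrite Q0 coprimep0 => /eqp_size; rewrite size_poly1 => ->.
by rewrite size_poly0 => -[] d00; move: d0; rewrite -d00.
Qed.

Lemma interp (PQ : rpair R) (G : nat -> rpair R) (L : seq (Chat R)) : (0 < d)%N ->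
  isratpair d PQ -> (forall n, isratpair d (G n)) ->
  (forall a : K, Some a \notin L ->
     cvgC (fun n => ratfun (G n) (Some a)) (ratfun PQ (Some a))) ->
  forall eps, 0 < eps -> exists N, forall n, (N <= n)%N ->
    exists2 c : K, c != 0 & forall i, (i <= d)%N ->
      sqn (c * (G n).1`_i - PQ.1`_i) < eps /\ sqn (c * (G n).2`_i - PQ.2`_i) < eps.
Proof.
move=> d0 hPQ hG hcv eps e0.
have Q0 := Q_neq0 d0 hPQ.
set H := PQ.2 * \prod_(z <- L) (if z is Some a then 'X - a%:P else 1).
have H0 : H != 0.
  rewrite mulf_neq0 // prodf_seq_neq0; apply/allP => -[a|] _ //=.
    by rewrite polyXsubC_eq0.
  exact: oner_neq0.
have [w [winj hw]] := choose_points m H0.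
have hwQ : forall j, PQ.2.[w j] != 0.
  by move=> j; have := hw j; rewrite /H hornerM mulf_eq0 negb_or => /andP [].
have hwL : forall j, Some (w j) \notin L.
  move=> j; apply/negP => hin; have := hw j.
  rewrite /H hornerM horner_prod mulf_eq0 negb_or => /andP [_].
  rewrite prodf_seq_neq0 => /allP /(_ _ hin) /=.
  by rewrite hornerXsubC subrr eqxx.
set b := fun j => PQ.1.[w j] / PQ.2.[w j].
have hrb : forall j, ratfun PQ (Some (w j)) = Some (b j).
  by move=> j; rewrite /= (hwQ j).
set bn := fun n j => odflt 0 (ratfun (G n) (Some (w j))).
have hcj : forall j, (exists N, forall n, (N <= n)%N -> ratfun (G n) (Some (w j)) != None) /\
    cvgK (fun n => bn n j) (b j).
  by move=> j; apply: chord_conv; rewrite -hrb; apply: hcv.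
have [fN hfN] := fin_all_exists (fun j => proj1 (hcj j)).
set N0 := \max_j fN j.
have hker := kernel_cvg (m := m) (Mn := fun n => Vm w (bn n)) (M := Vm w b)
   (v := vecp PQ.1 PQ.2) (xn := fun n => vecp (G n).1 (G n).2).
have hex : exists N, forall n, (N <= n)%N ->
    vecp (G n).1 (G n).2 != 0 /\ Vm w (bn n) *m vecp (G n).1 (G n).2 = 0.
  exists N0 => n hn; split; first exact: vecp_neq0.
  have [s1 s2 _ _] := isratpairP (hG n).
  apply/matrixP => j k; rewrite (ord1 k) Vm_vecp // mxE.
  have := hfN j n (leq_trans (leq_bigmax j) hn).
  rewrite /bn /=; case: ifP => // q0 _ /=; by apply/eqP; rewrite subr_eq0 divfK.
have [N hN] := hker (@Vm_cvg w bn b (fun j => proj2 (hcj j))) (vecp_neq0 hPQ)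
  (ker_limit winj hPQ hwQ) hex eps e0.
exists N => n /hN [c c0 hc]; exists c => // i hi.
have := hc (lshift d.+1 (Ordinal (hi : (i < d.+1)%N))); rewrite !vecp_u /= => h1.
have := hc (rshift d.+1 (Ordinal (hi : (i < d.+1)%N))); rewrite !vecp_d /= => h2.
by [].
Qed.
End Interp.
End C.

Section Main.
Variable R : realType.
Local Notation K := (R[i]).

Lemma chord2_refl (a : K) : chord2 (Some a) (Some a) = 0.
Proof. by rewrite /chord2 subrr /sqn /= expr0n /= addr0 mul0r. Qed.

Lemma seq_choice (P : nat -> rpair R -> Prop) : (forall n, exists x, P n x) ->
  exists f : nat -> rpair R, forall n, P n (f n).
Proof.
move=> h; exists (fun n => proj1_sig (constructive_indefinite_description _ (h n))).
by move=> n; case: (constructive_indefinite_description _ (h n)).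
Qed.
End Main.

Unset Implicit Arguments.

Theorem corollary4p15 (U : finType) (R : realType) (d : nat)
    (TX TY TZ : tos U R) (c : tcover U R)
    (fn : nat -> rpair R) (yn zn : nat -> U -> Chat R) (v : U) :
  dyn_system d TX TY TZ c ->
  dyn_approx d TX TY TZ c fn yn zn ->
  internal TX v -> cF c v = v -> rdeg (cf c v) = d ->
  rat_cvg d (fun n => ratfun (fn n)) (ratfun (cf c v)).
Proof.
move=> [_ [_ [_ [hcov [_ [_ [hsubY _]]]]]]].
move=> [_ hmark [phiY [psiY [phiZ [psiZ [hY hZ hconv hXeq]]]]]] hvX hFv hdeg.
have hvY : internal TY v by case: hsubY => -[_ hint _] _; exact: hint.
have [d1 hcf] : (1 <= rdeg (cf c v))%N /\ isratpair (rdeg (cf c v)) (cf c v).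
  by case: hcov => _ [_ [_ [_ [h5 _]]]]; exact: h5.
rewrite hdeg in d1 hcf.
have hfn : forall n, isratpair d (fn n) by move=> n; case: (hmark n).
have [A hA] := @seq_choice R (fun n x => isratpair 1 x /\ phiY n v = ratfun x)
  (fun n => match hY n v hvY with And4 h _ _ _ => h end).
have [B hB] := @seq_choice R (fun n x => isratpair 1 x /\ psiY n v = ratfun x)
  (fun n => match hY n v hvY with And4 _ h _ _ => h end).
set G := fun n => pcomp (A n) (pcomp (fn n) (B n)).
have hG : forall n, isratpair d (G n) /\
    ratfun (G n) = phiY n v \o ratfun (fn n) \o psiY n v.
  move=> n; have [hA1 hA2] := hA n; have [hB1 hB2] := hB n.
  have [r1 e1] := pcomp_ok (hfn n) hB1.
  have [r2 e2] := pcomp_ok hA1 r1.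
  rewrite muln1 mul1n in r2; split => //.
  by apply: functional_extensionality => z; rewrite e2 e1 hA2 hB2.
have [_ _ hlu] := hconv v hvY.
rewrite hFv in hlu.
set L := [seq tatt TY v w | w <- enum U].
have hpt : forall a : R[i], Some a \notin L ->
    cvgC (fun n => ratfun (G n) (Some a)) (ratfun (cf c v) (Some a)).
  move=> a haL.
  have nY : ~ Yv TY v (Some a).
    move=> [w _ hw]; move/negP: haL; apply; rewrite hw.
    by apply: map_f; rewrite mem_enum.
  have [delta dl0 hdl] := hlu _ nY.
  move=> eps e0; have [N hN] := hdl _ e0; exists N => n hn.
  have := hN n hn (Some a); rewrite chord2_refl => /(_ dl0).
  by rewrite (proj2 (hG n)) /= hXeq.
move=> Uset [hUrat hUopen] hsat hUg.
have [eps e0 heps] := hUopen _ hcf hUg.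
have [N hN] := interp d1 hcf (fun n => proj1 (hG n)) hpt e0.
exists N => n /hN [c0 c00 hc0].
have [hs1 hs2] := scale_ok c00 (proj1 (hG n)).
have hU := heps _ hs1 (fun i hi => ltac:(rewrite /= !coefZ; exact: hc0 i hi)).
have e : ratfun (c0 *: (G n).1, c0 *: (G n).2) = phiY n v \o ratfun (fn n) \o psiY n v.
  by rewrite -(proj2 (hG n)); apply: functional_extensionality => z; rewrite hs2.
rewrite e in hU; apply: (hsat _ _ hU).
have [m1 m2 can1 can2] := hY n v hvY.
exists (psiY n v), (phiY n v); split => //.
by apply: functional_extensionality => z /=; rewrite !can1.
Qed.
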